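(* Let $M=(Q_M,\Sigma,\delta_M,s_M,F_M)$ be a complete DFA with $m\ge 2$ states and $N=(Q_N,\Sigma,\delta_N,s_N,F_N)$ a complete DFA with $n\ge 1$ states over the same alphabet, and suppose $k:=|F_M\setminus\{s_M\}|\ge 1$. Then there exists a complete DFA with at most $(2^{m-1}+2^{m-k-1})\cdot n-n+1$ states that accepts $L(M)^*\cup L(N)$.
   Context: A DFA is a 5-tuple $(Q,\Sigma,\delta,s,F)$ with finite state set $Q$, finite alphabet $\Sigma$, transition function $\delta:Q\times\Sigma\to Q$ (total, i.e. the DFA is complete), initial state $s$ and final states $F\subseteq Q$; $L(M)$ is the language it accepts. For a language $L$, $L^*$ denotes its Kleene star. *)

(* Defs.v *)
From mathcomp Require Import all_boot.
Set Implicit Arguments. Unset Strict Implicit. Unset Printing Implicit Defensive.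

Record dfa (Sigma : finType) := DFA {
  state : finType;
  delta : state -> Sigma -> state;
  start : state;
  final : {set state}
}.

Definition run (Sigma : finType) (D : dfa Sigma) (q : state D) (w : seq Sigma)
  : state D := foldl (@delta Sigma D) q w.

Definition lang (Sigma : finType) (D : dfa Sigma) : seq Sigma -> Prop :=
  fun w => run (start D) w \in final D.

Definition kstar (Sigma : finType) (L : seq Sigma -> Prop) : seq Sigma -> Prop :=
  fun w => exists ws : seq (seq Sigma), (forall u, u \in ws -> L u) /\ flatten ws = w.

(* Main.v *)
Require Import Defs.
From mathcomp Require Import all_boot.
Set Implicit Arguments. Unset Strict Implicit. Unset Printing Implicit Defensive.

Lemma kstar_nil (S : finType) (L : seq S -> Prop) : kstar L [::].
Proof. by exists [::]. Qed.

Lemma kstar_cat (S : finType) (L : seq S -> Prop) u v :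
  kstar L u -> L v -> kstar L (u ++ v).
Proof.
move=> [ws [Hws <-]] Lv; exists (rcons ws v); split; last by rewrite flatten_rcons.
by move=> x; rewrite mem_rcons inE => /orP [/eqP -> | /Hws].
Qed.

Lemma kstar_dec (S : finType) (L : seq S -> Prop) w :
  kstar L w -> w <> [::] -> exists u v, [/\ w = u ++ v, kstar L u, L v & v <> [::]].
Proof.
move=> [ws [Hws <-]]; elim/last_ind: ws Hws => [//|ws x IH] Hws.
rewrite flatten_rcons.
have Hws' : forall u, u \in ws -> L u by move=> u hu; apply: Hws; rewrite mem_rcons inE hu orbT.
case: x Hws => [|a x] Hws.
  by rewrite cats0; apply: IH.
move=> _; exists (flatten ws), (a :: x); split => //.
  by exists ws.
by apply: Hws; rewrite mem_rcons inE eqxx.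
Qed.

Definition fstep (Sigma : finType) (M : dfa Sigma) (S : {set state M}) (a : Sigma)
  : {set state M} :=
  let T := [set delta x a | x in S] in
  if T :&: final M != set0 then start M |: T else T.

Definition Sf (Sigma : finType) (M : dfa Sigma) (w : seq Sigma) : {set state M} :=
  foldl (@fstep Sigma M) [set start M] w.

Lemma SfP (Sigma : finType) (M : dfa Sigma) w x :
  x \in Sf M w <-> exists u v, [/\ w = u ++ v, kstar (lang M) u & run (start M) v = x].
Proof.
elim/last_ind: w x => [|w a IH] x.
  rewrite /Sf /= inE; split.
    by move=> /eqP ->; exists [::], [::]; split => //; apply: kstar_nil.
  by move=> [u [v [E _ <-]]]; case: u E => [|??] //; case: v => [|??] //.
have key : forall u v, rcons w a = u ++ v -> v <> [::] ->
    exists v0, v = rcons v0 a /\ w = u ++ v0.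
  move=> u v; case/lastP: v => [|v0 b] // ; rewrite -rcons_cat => /rcons_inj [-> ->] _.
  by exists v0.
rewrite /Sf foldl_rcons -/(Sf M w) /fstep.
set T := [set delta x a | x in Sf M w].
have inT : forall y, y \in T <-> exists u v, [/\ w = u ++ v, kstar (lang M) u & run (start M) (rcons v a) = y].
  move=> y; split.
    by move=> /imsetP [z /IH [u [v [E K R]]] ->]; exists u, v; split => //; rewrite /run foldl_rcons -/(run _ v) R.
  move=> [u [v [E K R]]]; rewrite -R /run foldl_rcons; apply: imset_f; apply/IH; by exists u, v.
have TF : T :&: final M != set0 -> kstar (lang M) (rcons w a).
  case/set0Pn => y; rewrite inE => /andP [/inT [u [v [E K R]]] Fy].
  rewrite E rcons_cat; apply: kstar_cat => //; by rewrite /lang R.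
have Tsub : forall y, y \in T -> y \in (if T :&: final M != set0 then start M |: T else T).
  by move=> y hy; case: ifP => // _; rewrite in_setU1 hy orbT.
split.
  case: ifP => [hT|_]; last first.
    by move=> /inT [u [v [E K R]]]; exists u, (rcons v a); rewrite E rcons_cat.
  rewrite in_setU1 => /orP [/eqP -> | /inT [u [v [E K R]]]].
    by exists (rcons w a), [::]; rewrite cats0; split => //; apply: TF.
  by exists u, (rcons v a); rewrite E rcons_cat.
move=> [u [v [E K R]]].
case: v E R => [|b v] E R.
  rewrite cats0 in E; subst u; rewrite /= in R; subst x.
  have nz : rcons w a <> [::] by case: (w) => [|??].
  have [u' [v' [E' K' L' N']]] := kstar_dec K nz.
  have [v0 [Ev Ew]] := key _ _ E' N'.
  have hT : T :&: final M != set0.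
    apply/set0Pn; exists (run (start M) v'); rewrite inE; apply/andP; split => //.
    by apply/inT; exists u', v0; rewrite Ev.
  by rewrite hT in_setU1 eqxx.
have [v0 [Ev Ew]] := key _ _ E (fun H : b :: v = [::] => ltac:(discriminate)).
apply: Tsub; apply/inT; exists u, v0; split => //; by rewrite -Ev.
Qed.

Lemma Sf_final (Sigma : finType) (M : dfa Sigma) w :
  w <> [::] -> (Sf M w :&: final M != set0) <-> kstar (lang M) w.
Proof.
move=> nz; split.
  case/set0Pn => y; rewrite inE => /andP [/SfP [u [v [E K R]]] Fy].
  by rewrite E; apply: kstar_cat => //; rewrite /lang R.
move=> K; have [u [v [E K' L N']]] := kstar_dec K nz.
apply/set0Pn; exists (run (start M) v); rewrite inE; apply/andP; split => //.
by apply/SfP; exists u, v.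
Qed.

Definition Pst (Sigma : finType) (M N : dfa Sigma) (p : {set state M} * state N) : bool :=
  (p.1 != set0) && ((p.1 :&: final M != set0) ==> (start M \in p.1)).

Definition pstep (Sigma : finType) (M N : dfa Sigma) (p : {set state M} * state N) (a : Sigma)
  : {set state M} * state N := (fstep p.1 a, delta p.2 a).

Lemma pstepP (Sigma : finType) (M N : dfa Sigma) p a :
  p.1 != set0 -> @Pst Sigma M N (@pstep Sigma M N p a).
Proof.
move=> /set0Pn [x hx]; rewrite /Pst /pstep /= /fstep.
set T := [set delta x a | x in p.1].
have hT : T != set0 by apply/set0Pn; exists (delta x a); apply: imset_f.
case: ifP => [_|hF].
  by rewrite in_setU1 eqxx implybT andbT; apply/set0Pn; exists (start M); rewrite in_setU1 eqxx.
by rewrite hT hF.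
Qed.

Definition stT (Sigma : finType) (M N : dfa Sigma) : finType :=
  option {p : {set state M} * state N | @Pst Sigma M N p}.

Definition proj (Sigma : finType) (M N : dfa Sigma) (d : stT M N) : {set state M} * state N :=
  if d is Some x then val x else ([set start M], start N).

Lemma proj_ne (Sigma : finType) (M N : dfa Sigma) (d : stT M N) : (proj d).1 != set0.
Proof.
case: d => [[p Hp]|] /=; first by case/andP: Hp.
by apply/set0Pn; exists (start M); rewrite inE.
Qed.

Definition Ddelta (Sigma : finType) (M N : dfa Sigma) (d : stT M N) (a : Sigma) : stT M N :=
  Some (exist _ (@pstep Sigma M N (proj d) a) (pstepP a (proj_ne d))).

Definition Dfinal (Sigma : finType) (M N : dfa Sigma) : {set stT M N} :=
  [set d : stT M N | if d is Some x then ((val x).1 :&: final M != set0) || ((val x).2 \in final N) else true].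

Definition D (Sigma : finType) (M N : dfa Sigma) : dfa Sigma :=
  @DFA Sigma (stT M N) (@Ddelta Sigma M N) None (Dfinal M N).

Lemma proj_run (Sigma : finType) (M N : dfa Sigma) (d : stT M N) w :
  proj (foldl (@Ddelta Sigma M N) d w) = foldl (@pstep Sigma M N) (proj d) w.
Proof. by elim: w d => [|a w IH] d //=; rewrite IH. Qed.

Lemma pstep_run (Sigma : finType) (M N : dfa Sigma) p w :
  foldl (@pstep Sigma M N) p w = (foldl (@fstep Sigma M) p.1 w, run p.2 w).
Proof. by elim: w p => [|a w IH] [S q] //=; rewrite IH. Qed.

Lemma lang_D (Sigma : finType) (M N : dfa Sigma) w :
  lang (D M N) w <-> (kstar (lang M) w \/ lang N w).
Proof.
case/lastP: w => [|w a].
  rewrite /lang /= /Dfinal inE; split => // _; left; apply: kstar_nil.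
have nz : rcons w a <> [::] by case: (w) => [|??].
have [H1 H2] := @Sf_final _ M _ nz.
rewrite /lang /run foldl_rcons /= /Dfinal inE /= proj_run.
rewrite pstep_run /= -/(Sf M w).
have -> : fstep (Sf M w) a = Sf M (rcons w a) by rewrite /Sf foldl_rcons.
rewrite -/(run (start N) w) -/(run (start M) _).
have -> : delta (run (start N) w) a = run (start N) (rcons w a) by rewrite /run foldl_rcons.
rewrite -/(lang N (rcons w a)).
split => [/orP [/H1 ?|?] | [/H2 ->|h]]; [by left|by right|done|]. by apply/orP; right.
Qed.

Lemma cardA (Sigma : finType) (M : dfa Sigma) :
  #|[set S : {set state M} | (S != set0) && ((S :&: final M != set0) ==> (start M \in S))]|
  <= 2 ^ (#|state M| - 1) + (2 ^ (#|state M| - #|final M :\ start M| - 1) - 1).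
Proof.
set s := start M.
set B1 := [set s |: X | X in powerset [set~ s]].
set B2 := powerset (~: (s |: final M)) :\ set0.
have sub : [set S : {set state M} | (S != set0) && ((S :&: final M != set0) ==> (s \in S))]
   \subset B1 :|: B2.
  apply/subsetP => S; rewrite inE => /andP [ne hS].
  case hs: (s \in S).
    rewrite in_setU; apply/orP; left; apply/imsetP; exists (S :\ s).
      by rewrite inE; apply/subsetP => y; rewrite !inE => /andP [].
    by rewrite setD1K.
  rewrite in_setU; apply/orP; right; rewrite !inE ne /=.
  apply/subsetP => y hy; rewrite !inE; apply/negP => /orP [/eqP E | Fy].
    by rewrite -E hy in hs.
  move: hS; rewrite hs implybF negbK => /eqP E.
  have : y \in S :&: final M by rewrite inE hy.
  by rewrite E inE.
apply: (leq_trans (subset_leq_card sub)).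
apply: (leq_trans (leq_card_setU _ _)); apply: leq_add.
  apply: (leq_trans (leq_imset_card _ _)).
  by rewrite card_powerset cardsC1 subn1.
have c2 : #|powerset (~: (s |: final M))| = 1 + #|B2|.
  by rewrite (cardsD1 set0) inE sub0set.
have c3 : #|s |: final M| = (#|final M :\ s|).+1.
  have E : (s |: final M) :\ s = final M :\ s.
    by apply/setP => y; rewrite !inE; case: (y == s).
  by rewrite (cardsD1 s) in_setU1 eqxx /= E.
have c4 : #|~: (s |: final M)| = #|state M| - #|final M :\ s| - 1.
  by rewrite cardsCs setCK c3 subnS subn1.
by rewrite -c4 -card_powerset c2 add1n subn1.
Qed.

Lemma card_D (Sigma : finType) (M N : dfa Sigma) :
  #|state (D M N)| <= (2 ^ (#|state M| - 1) + (2 ^ (#|state M| - #|final M :\ start M| - 1) - 1)) * #|state N| + 1.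
Proof.
rewrite /= /stT card_option card_sig addn1 ltnS.
set A := [set S : {set state M} | (S != set0) && ((S :&: final M != set0) ==> (start M \in S))].
have sub : [pred p | @Pst Sigma M N p] \subset setX A [set: state N].
  by apply/subsetP => p; rewrite !inE /Pst => ->.
apply: (leq_trans (subset_leq_card sub)); rewrite cardsX cardsT.
by rewrite leq_mul2r (cardA M) orbT.
Qed.

Unset Implicit Arguments.

Theorem theorem1 (Sigma : finType) (M N : dfa Sigma) :
  let m := #|state M| in
  let n := #|state N| in
  let k := #|final M :\ start M| in
  2 <= m -> 1 <= n -> 1 <= k ->
  exists D : dfa Sigma,
    #|state D| <= (2 ^ (m - 1) + 2 ^ (m - k - 1)) * n - n + 1 /\
    forall w : seq Sigma, lang D w <-> (kstar (lang M) w \/ lang N w).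
Proof.
move=> m n k _ _ _; exists (D M N); split; last by move=> w; apply: lang_D.
apply: (leq_trans (card_D M N)); rewrite leq_add2r -/m -/n -/k.
have hb : 0 < 2 ^ (m - k - 1) by rewrite expn_gt0.
by rewrite addnBA // mulnBl mul1n.
Qed.
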